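(* For every finite graph $G$ and every integer $i\geq1$, $$\mathrm{lw}_i(G)=\min_{(P^1,\mathcal{Z}^1),\ldots,(P^i,\mathcal{Z}^i)}\ \max\Big\{\Big|\bigcap_{j=1}^i Z^j_{u_j}\Big| : u_j\in V(P^j)\text{ for } j=1,\ldots,i\Big\},$$ where the minimum ranges over all $i$-tuples of path decompositions $(P^j,\mathcal{Z}^j)$, $\mathcal{Z}^j=(Z^j_u)_{u\in V(P^j)}$, of $G$.
   Context: All graphs are finite, simple and undirected. A path decomposition of $G$ is a pair $(P,\mathcal{Z})$ with $P$ a path and $\mathcal{Z}=(Z_u)_{u\in V(P)}$ subsets of $V(G)$ such that every edge of $G$ lies in some $Z_u$ and for every $v\in V(G)$ the set $\{u: v\in Z_u\}$ is non-empty and induces a connected subpath of $P$. For vertices $u,v$ of a connected graph, the interval $I(u,v)$ is the set of vertices lying on some shortest $(u,v)$-path. A set $S$ of vertices is (geodesically) convex if $I(u,v)\subseteq S$ for all $u,v\in S$. A graph $M$ is median if it is connected and for any three vertices $u,v,w$ we have $|I(u,v)\cap I(v,w)\cap I(w,u)|=1$. A median decomposition of a graph $G$ is a pair $(M,\mathcal{X})$ where $M$ is a median graph and $\mathcal{X}=(X_a)_{a\in V(M)}$ is a family of subsets of $V(G)$ (bags) such that (M1) for every edge $uv\in E(G)$ there is $a\in V(M)$ with $u,v\in X_a$, and (M2) for every $v\in V(G)$ the set $\{a\in V(M): v\in X_a\}$ is non-empty and convex in $M$. Its width is $\max_{a\in V(M)}|X_a|$. A $k$-lattice is a Cartesian product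 of $k$ (finite) paths. The lattice dimension of a graph $M$ is the least $k$ such that $M$ admits an isometric (distance-preserving) embedding into a $k$-lattice. For $i\geq1$, an $i$-lattice decomposition of $G$ is a median decomposition $(M,\mathcal{X})$ of $G$ with $M$ of lattice dimension at most $i$, and the $i$-latticewidth $\mathrm{lw}_i(G)$ is the minimum width of an $i$-lattice decomposition of $G$. *)

(* Defs.v *)
From HB Require Import structures.
From mathcomp Require Import all_boot.
Set Implicit Arguments. Unset Strict Implicit. Unset Printing Implicit Defensive.

Definition simple_graph (T : finType) (e : rel T) : Prop :=
  symmetric e /\ irreflexive e.

Fixpoint walkb (T : finType) (e : rel T) (k : nat) (u v : T) : bool :=
  match k with
  | 0 => u == v
  | k'.+1 => [exists w, e u w && walkb e k' w v]
  end.

(* graph distance (least length of a walk); equals #|T| if v is unreachable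
   (irrelevant here: only used on connected graphs). *)
Definition gdist (T : finType) (e : rel T) (u v : T) : nat :=
  find (fun k => walkb e k u v) (iota 0 #|T|).

Definition interval (T : finType) (e : rel T) (u v : T) : {set T} :=
  [set w | gdist e u w + gdist e w v == gdist e u v].

Definition connected_graph (T : finType) (e : rel T) : Prop :=
  (exists a : T, True) /\ (forall a b : T, connect e a b).

Definition median_graph (T : finType) (e : rel T) : Prop :=
  connected_graph e /\
  forall u v w : T, #|interval e u v :&: interval e v w :&: interval e w u| = 1.

Definition gconvex (T : finType) (e : rel T) (S : {set T}) : Prop :=
  forall u v, u \in S -> v \in S -> interval e u v \subset S.

Definition absdiff (m n : nat) : nat := (m - n) + (n - m).

(* isometric embedding into a k-lattice P_{n_0} x ... x P_{n_{k-1}}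
   (path P_n has vertices 0..n-1; product distance is the l1 distance) *)
Definition lattice_embeds (T : finType) (e : rel T) (k : nat) : Prop :=
  exists (n : 'I_k -> nat) (phi : T -> 'I_k -> nat),
    (forall a j, phi a j < n j) /\
    (forall a b, gdist e a b = \sum_(j < k) absdiff (phi a j) (phi b j)).

Definition lattice_dim_le (T : finType) (e : rel T) (i : nat) : Prop :=
  exists2 k, k <= i & lattice_embeds e k.

Definition median_decomposition (T : finType) (e : rel T)
    (M : finType) (eM : rel M) (X : M -> {set T}) : Prop :=
  simple_graph eM /\ median_graph eM /\
  (forall u v, e u v -> exists a, (u \in X a) && (v \in X a)) /\
  (forall v, (exists a, v \in X a) /\ gconvex eM [set a | v \in X a]).

Definition md_width (T M : finType) (X : M -> {set T}) : nat :=
  \max_(a : M) #|X a|.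

Definition lattice_dec_width (T : finType) (e : rel T) (i w : nat) : Prop :=
  exists (M : finType) (eM : rel M) (X : M -> {set T}),
    median_decomposition e eM X /\ lattice_dim_le eM i /\ md_width X = w.

(* path decomposition: the path P has vertices 0..size Z - 1 (size Z >= 1),
   bag of vertex k is nth set0 Z k *)
Definition path_decomposition (T : finType) (e : rel T) (Z : seq {set T}) : Prop :=
  0 < size Z /\
  (forall u v, e u v ->
     exists2 k, k < size Z & (u \in nth set0 Z k) && (v \in nth set0 Z k)) /\
  (forall v, (exists2 k, k < size Z & v \in nth set0 Z k) /\
     (forall a b c, a <= b -> b <= c -> c < size Z ->
        v \in nth set0 Z a -> v \in nth set0 Z c -> v \in nth set0 Z b)).

Definition bag_inter (T : finType) (i : nat) (Zs : 'I_i -> seq {set T})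
    (u : 'I_i -> nat) : {set T} :=
  \bigcap_(j < i) nth set0 (Zs j) (u j).

Definition tuple_value (T : finType) (i : nat) (Zs : 'I_i -> seq {set T}) (w : nat) : Prop :=
  (exists u : 'I_i -> nat, (forall j, u j < size (Zs j)) /\ #|bag_inter Zs u| = w) /\
  (forall u : 'I_i -> nat, (forall j, u j < size (Zs j)) -> #|bag_inter Zs u| <= w).

Definition path_tuple_width (T : finType) (e : rel T) (i w : nat) : Prop :=
  exists Zs : 'I_i -> seq {set T},
    (forall j, path_decomposition e (Zs j)) /\ tuple_value Zs w.

Definition is_min (P : nat -> Prop) (w : nat) : Prop :=
  P w /\ forall w', P w' -> w <= w'.

Definition latticewidth_is (T : finType) (e : rel T) (i w : nat) : Prop :=
  is_min (lattice_dec_width e i) w.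

(* Main.v *)
Require Import Defs.
From mathcomp Require Import all_boot zify.
From Stdlib Require Import Classical.
Set Implicit Arguments. Unset Strict Implicit. Unset Printing Implicit Defensive.

Lemma absdiffC m n : absdiff m n = absdiff n m.
Proof. by rewrite /absdiff addnC. Qed.

Lemma leq_term (I : finType) (f : I -> nat) j : f j <= \sum_i f i.
Proof. by rewrite (bigD1 j) //= leq_addr. Qed.

Lemma sum_eq_le (I : finType) (f g : I -> nat) :
  (forall j, g j <= f j) -> \sum_j f j = \sum_j g j -> forall j, f j = g j.
Proof.
move=> le E j; apply/eqP; rewrite eqn_leq le andbT.
move: E; rewrite (bigD1 j) //= [X in _ = X -> _](bigD1 j) //=.
have H : \sum_(i | i != j) g i <= \sum_(i | i != j) f i by apply: leq_sum.
lia.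
Qed.

Lemma sum_between k (x y z : 'I_k -> nat) :
  \sum_j absdiff (x j) (z j) + \sum_j absdiff (z j) (y j) = \sum_j absdiff (x j) (y j) ->
  forall j, absdiff (x j) (z j) + absdiff (z j) (y j) = absdiff (x j) (y j).
Proof.
rewrite -big_split /= => H; apply: sum_eq_le H => j /=; rewrite /absdiff; lia.
Qed.

Definition med_prop (M : finType) (eM : rel M) :=
  forall u v w : M, #|interval eM u v :&: interval eM v w :&: interval eM w u| = 1.

Lemma median_ex (M : finType) (eM : rel M) : med_prop eM -> forall u v w,
  exists m, [/\ m \in interval eM u v, m \in interval eM v w & m \in interval eM w u].
Proof.
move=> H u v w; have : 0 < #|interval eM u v :&: interval eM v w :&: interval eM w u|.
  by rewrite H.
by case/card_gt0P => m; rewrite !in_setI => /andP[/andP[h1 h2] h3]; exists m; split.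
Qed.

Lemma helly (M : finType) (eM : rel M) (a0 : M) : med_prop eM ->
  forall n (L : seq {set M}), size L = n ->
  (forall A, A \in L -> gconvex eM A) ->
  (forall A B, A \in L -> B \in L -> exists x, x \in A /\ x \in B) ->
  exists x, forall A, A \in L -> x \in A.
Proof.
move=> med n; elim: n => [|n IH] [|A [|B r]] //=.
- by move=> _ _ _; exists a0.
- move=> _ _ P; have [x [hx _]] := P A A (mem_head _ _) (mem_head _ _).
  by exists x => C; rewrite inE => /eqP ->.
- case=> Hs cv P.
  have AL : A \in [:: A, B & r] by rewrite inE eqxx.
  have BL : B \in [:: A, B & r] by rewrite !inE eqxx orbT.
  have cA : gconvex eM A by apply: cv; rewrite inE eqxx.
  have cB : gconvex eM B by apply: cv; rewrite !inE eqxx orbT.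
  have [|||x Hx] := IH ((A :&: B) :: r).
  + by [].
  + move=> C; rewrite inE => /orP[/eqP ->|Cr].
      move=> u v; rewrite !inE => /andP[uA uB] /andP[vA vB].
      apply/subsetP => z zI; rewrite inE.
      by rewrite (subsetP (cA u v uA vA)) // (subsetP (cB u v uB vB)).
    by apply: cv; rewrite !inE Cr !orbT.
  + have key : forall C, C \in r -> exists x, x \in A :&: B /\ x \in C.
      move=> C Cr.
      have CL : C \in [:: A, B & r] by rewrite !inE Cr !orbT.
      have cC : gconvex eM C by apply: cv; rewrite !inE Cr !orbT.
      have [x [xC xA]] := P C A CL AL.
      have [y [yC yB]] := P C B CL BL.
      have [z [zA zB]] := P A B AL BL.
      have [m [m1 m2 m3]] := median_ex med x y z.
      exists m; rewrite inE (subsetP (cC x y xC yC)) // (subsetP (cB y z yB zB)) //.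
      by rewrite (subsetP (cA z x zA xA)).
    move=> C D; rewrite !inE => /orP[/eqP ->|Cr] /orP[/eqP ->|Dr].
    * have [z [zA zB]] := P A B AL BL.
      by exists z; rewrite inE zA zB.
    * by have [x []] := key D Dr; exists x.
    * by have [x []] := key C Cr; exists x.
    * by apply: P; rewrite !inE ?Cr ?Dr !orbT.
  + exists x => C; rewrite !inE => /orP[/eqP ->|/orP[/eqP ->|Cr]].
    * by have := Hx (A :&: B) (mem_head _ _); rewrite inE => /andP[].
    * by have := Hx (A :&: B) (mem_head _ _); rewrite inE => /andP[].
    * by apply: Hx; rewrite inE Cr orbT.
Qed.

Lemma gdist_eq0 (M : finType) (eM : rel M) a b : gdist eM a b = 0 -> a = b.
Proof.
rewrite /gdist; have : 0 < #|M| by apply/card_gt0P; exists a.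
case: #|M| => // n _ /=; by case: eqP.
Qed.

Lemma find_iota (p : pred nat) n d : d < n -> p d -> (forall k, k < d -> ~~ p k) ->
  find p (iota 0 n) = d.
Proof.
move=> dn pd hk.
have hs : has p (iota 0 n) by apply/hasP; exists d => //; rewrite mem_iota.
have := hs; rewrite has_find size_iota => fl.
apply/eqP; rewrite eqn_leq; apply/andP; split.
  rewrite leqNgt; apply/negP => /(before_find 0); rewrite nth_iota // add0n pd //.
rewrite leqNgt; apply/negP => lt; have := nth_find 0 hs; rewrite nth_iota // add0n.
by move/negP: (hk _ lt).
Qed.

Lemma walk_connect (M : finType) (eM : rel M) k a b : walkb eM k a b -> connect eM a b.
Proof.
elim: k a => [|k IH] a /=; first by move/eqP ->.
case/existsP => c /andP[ac cb]; apply: connect_trans (connect1 ac) (IH _ cb).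
Qed.

Lemma mem_nth_size (T : finType) (Z : seq {set T}) v c : v \in nth set0 Z c -> c < size Z.
Proof. by rewrite ltnNge; apply: contraL => h; rewrite nth_default // inE. Qed.


Definition gD i n (f g : {ffun 'I_i -> 'I_n.+1}) : nat := \sum_j absdiff (f j) (g j).
Definition gE i n : rel {ffun 'I_i -> 'I_n.+1} := fun f g => gD f g == 1.

Lemma gD_sym i n (f g : {ffun 'I_i -> 'I_n.+1}) : gD f g = gD g f.
Proof. by apply: eq_bigr => j _; rewrite absdiffC. Qed.

Lemma gD_tri i n (f g h : {ffun 'I_i -> 'I_n.+1}) : gD f g <= gD f h + gD h g.
Proof. rewrite /gD -big_split; apply: leq_sum => j _ /=; rewrite /absdiff; lia. Qed.

Lemma gD_refl i n (f : {ffun 'I_i -> 'I_n.+1}) : gD f f = 0.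
Proof. by apply: big1 => j _; rewrite /absdiff subnn. Qed.

Lemma gD_eq0 i n (f g : {ffun 'I_i -> 'I_n.+1}) : gD f g = 0 -> f = g.
Proof.
move=> H; apply/ffunP => j; apply: val_inj => /=.
have := leq_term (fun j => absdiff (f j) (g j)) j; rewrite -/(gD f g) H /absdiff; lia.
Qed.

Lemma walk_ge i n k (f g : {ffun 'I_i -> 'I_n.+1}) : walkb (@gE i n) k f g -> gD f g <= k.
Proof.
elim: k f => [|k IH] f /=; first by move/eqP ->; rewrite gD_refl.
case/existsP => h /andP[/eqP fh hg]; have := IH _ hg; have := gD_tri f g h; lia.
Qed.

Lemma walk_D i n d (f g : {ffun 'I_i -> 'I_n.+1}) : gD f g = d -> walkb (@gE i n) d f g.
Proof.
elim: d f => [|d IH] f /=; first by move/gD_eq0 ->.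
move=> Hd.
have [j hj] : exists j, (f j : nat) != g j.
  apply: NNPP => nE; have : gD f g = 0.
    apply: big1 => j _; have : ~ ((f j : nat) != g j) by move=> h; apply: nE; exists j.
    by move/negP; rewrite negbK => /eqP ->; rewrite /absdiff subnn.
  by rewrite Hd.
pose s := if f j < g j then (f j).+1 else (f j).-1.
have sl : s < n.+1.
  rewrite /s; case: ifP => h; first by have := ltn_ord (g j); lia.
  by have := ltn_ord (f j); lia.
pose h := [ffun x => if x == j then inord s else f x].
have hj' : (h j : nat) = s by rewrite ffunE eqxx inordK.
have hx : forall x, x != j -> h x = f x by move=> x xj; rewrite ffunE (negbTE xj).
have rest : forall (u : {ffun 'I_i -> 'I_n.+1}), \sum_(x | x != j) absdiff (h x) (u x) = \sum_(x | x != j) absdiff (f x) (u x).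
  by move=> u; apply: eq_bigr => x xj; rewrite hx.
have e1 : gD f h = 1.
  rewrite gD_sym /gD (bigD1 j) //= rest.
  rewrite (eq_bigr (fun _ => 0)); last by move=> x _; rewrite /absdiff subnn.
  rewrite big1 // hj' /s; move: hj; case: ifP => ? ?; rewrite /absdiff; lia.
apply/existsP; exists h; rewrite /gE e1 eqxx /=; apply: IH.
have E : gD h g + 1 = gD f g.
  rewrite /gD (bigD1 j) //= [X in _ = X](bigD1 j) //= hj'.
  rewrite [X in _ + X + _](eq_bigr (fun x => absdiff (f x) (g x))); last by move=> x xj; rewrite hx.
  set S := \sum_(_ < _ | _) _.
  move: hj; rewrite /s; case: ifP => c hj; rewrite /absdiff; lia.
lia.
Qed.

Lemma gD_bound i n (f g : {ffun 'I_i -> 'I_n.+1}) : gD f g <= i * n.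
Proof.
rewrite /gD -[X in _ <= X * _]card_ord -sum_nat_const; apply: leq_sum => j _.
have := ltn_ord (f j); have := ltn_ord (g j); rewrite /absdiff; lia.
Qed.

Lemma pow_bound i n : i * n < n.+1 ^ i.
Proof.
elim: i => [|i IH]; first by rewrite expn0.
rewrite expnS; nia.
Qed.

Lemma gdist_grid i n (f g : {ffun 'I_i -> 'I_n.+1}) : gdist (@gE i n) f g = gD f g.
Proof.
rewrite /gdist; apply: find_iota.
- rewrite card_ffun !card_ord; apply: leq_ltn_trans (gD_bound f g) (pow_bound i n).
- exact: walk_D.
- by move=> k lt; apply/negP => /walk_ge; lia.
Qed.

Definition med3 a b c := maxn (minn a b) (minn (maxn a b) c).
Lemma med3_btw a b c : [/\ absdiff a (med3 a b c) + absdiff (med3 a b c) b = absdiff a b,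
   absdiff b (med3 a b c) + absdiff (med3 a b c) c = absdiff b c &
   absdiff c (med3 a b c) + absdiff (med3 a b c) a = absdiff c a].
Proof. rewrite /med3 /absdiff; split; lia. Qed.
Lemma med3_uniq a b c x : absdiff a x + absdiff x b = absdiff a b ->
   absdiff b x + absdiff x c = absdiff b c ->
   absdiff c x + absdiff x a = absdiff c a -> x = med3 a b c.
Proof. rewrite /med3 /absdiff; lia. Qed.

Lemma grid_median i n : med_prop (@gE i n).
Proof.
move=> u v w.
have ml : forall j, med3 (u j) (v j) (w j) < n.+1.
  move=> j; have := ltn_ord (u j); have := ltn_ord (v j); have := ltn_ord (w j).
  rewrite /med3; lia.
pose m := [ffun j => inord (med3 (u j) (v j) (w j)) : 'I_n.+1].
have mj : forall j, (m j : nat) = med3 (u j) (v j) (w j) by move=> j; rewrite ffunE inordK.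
suff -> : interval (@gE i n) u v :&: interval (@gE i n) v w :&: interval (@gE i n) w u = [set m].
  by rewrite cards1.
apply/setP => x; rewrite !in_setI !in_set !gdist_grid in_set1.
apply/idP/idP.
- case/andP => [/andP[/eqP h1 /eqP h2] /eqP h3].
  have b1 := sum_between h1; have b2 := sum_between h2; have b3 := sum_between h3.
  apply/eqP/ffunP => j; apply: val_inj => /=; rewrite mj.
  exact: med3_uniq (b1 j) (b2 j) (b3 j).
- move/eqP => ->.
  have E : forall a b c : {ffun 'I_i -> 'I_n.+1},
     (forall j, absdiff (a j) (c j) + absdiff (c j) (b j) = absdiff (a j) (b j)) ->
     gD a c + gD c b == gD a b.
    by move=> a b c H; rewrite /gD -big_split; apply/eqP/eq_bigr => j _; apply: H.
  by rewrite !E // => j; rewrite mj; case: (med3_btw (u j) (v j) (w j)).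
Qed.


Lemma pick_ok n (p : pred 'I_n.+1) : (exists k : 'I_n.+1, p k) -> p (odflt ord0 [pick k | p k]).
Proof. by case: pickP => //= H [k]; rewrite H. Qed.

Lemma btw_le a b c : a <= c -> absdiff a b + absdiff b c = absdiff a c -> a <= b <= c.
Proof. rewrite /absdiff; lia. Qed.

Lemma dir1 (T : finType) (e : rel T) i w : path_tuple_width e i w -> lattice_dec_width e i w.
Proof.
case=> Zs [PD [[u0 [u0l u0w]] TV2]].
pose n := \max_(j < i) size (Zs j).
have szn : forall j, size (Zs j) < n.+1 by move=> j; rewrite ltnS /n; exact: (@leq_bigmax _ (fun j => size (Zs j)) j).
pose X (f : {ffun 'I_i -> 'I_n.+1}) := bag_inter Zs (fun j => nat_of_ord (f j)).
have inX : forall v (f : {ffun 'I_i -> 'I_n.+1}), reflect (forall j, v \in nth set0 (Zs j) (f j)) (v \in X f).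
  move=> v f; apply: (iffP bigcapP) => H j; first exact: H. by move=> _; apply: H.
exists {ffun 'I_i -> 'I_n.+1}, (@gE i n), X.
split; last split.
- split; last split; last split.
  + split; first by move=> f g; rewrite /gE gD_sym.
    by move=> f; rewrite /gE gD_refl.
  + split; last exact: grid_median.
    split; first by exists [ffun=> ord0].
    move=> a b; apply: (@walk_connect _ _ (gD a b)); exact: walk_D.
  + move=> u v uv.
    pose p j := fun k : 'I_n.+1 => (u \in nth set0 (Zs j) k) && (v \in nth set0 (Zs j) k).
    have Hp : forall j, p j (odflt ord0 [pick k | p j k]).
      move=> j; apply: pick_ok; have [_ [Hc _]] := PD j; have [k kl kb] := Hc u v uv.
      by exists (Ordinal (leq_trans kl (ltnW (szn j)))).
    exists [ffun j => odflt ord0 [pick k | p j k]].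
    by apply/andP; split; apply/inX => j; rewrite ffunE; case/andP: (Hp j).
  + move=> v; split.
      exists [ffun j => odflt ord0 [pick k : 'I_n.+1 | v \in nth set0 (Zs j) k]].
      apply/inX => j; rewrite ffunE; apply: (@pick_ok n (fun k : 'I_n.+1 => v \in nth set0 (Zs j) k)).
      have [_ [_ Hc]] := PD j; have [[k kl kb] _] := Hc v.
      by exists (Ordinal (leq_trans kl (ltnW (szn j)))).
    move=> f g; rewrite !inE => /inX Hf /inX Hg; apply/subsetP => h.
    rewrite /interval in_set !gdist_grid => /eqP /sum_between Hb; rewrite inE; apply/inX => j.
    have [_ [_ Hc]] := PD j; have [_ Hi] := Hc v.
    have := Hb j; have fl := mem_nth_size (Hf j); have gl := mem_nth_size (Hg j).
    case: (leqP (f j) (g j)) => c H.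
      by case/andP: (btw_le c H) => h1 h2; apply: (Hi (f j) _ (g j)).
    have c' := ltnW c; rewrite absdiffC addnC absdiffC [absdiff (f j) _]absdiffC in H.
    by case/andP: (btw_le c' H) => h1 h2; apply: (Hi (g j) _ (f j)).
- exists i => //; exists (fun _ => n.+1), (fun (f : {ffun 'I_i -> 'I_n.+1}) j => nat_of_ord (f j)); split => //.
  by move=> a b; rewrite gdist_grid.
- apply/eqP; rewrite eqn_leq; apply/andP; split.
+ apply/bigmax_leqP => f _.
  case: (boolP [forall j, f j < size (Zs j)]) => [/forallP H|/forallPn [j Hj]].
    by apply: TV2.
  have : X f \subset nth set0 (Zs j) (f j) by apply/subsetP => x /inX; apply.
  have Hd : nth set0 (Zs j) (f j) = set0 by rewrite nth_default // leqNgt.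
  by move/subset_leq_card; rewrite Hd cards0 leqn0 => /eqP ->.
+ pose f := [ffun j => inord (u0 j) : 'I_n.+1].
  have E : bag_inter Zs u0 = X f.
    apply: eq_bigr => j _; rewrite ffunE inordK //; exact: leq_trans (u0l j) (ltnW (szn j)).
  rewrite -u0w E; exact: (@leq_bigmax _ (fun f => #|X f|) f).
Qed.


Lemma max_exists (P : nat -> Prop) w : (exists n, P n) -> (forall n, P n -> n <= w) ->
  exists m, P m /\ forall n, P n -> n <= m.
Proof.
elim: w => [|w IH] [n Pn] H.
  by exists n; split => // m Pm; have := H m Pm; have := H n Pn; lia.
case: (classic (P w.+1)) => Pw; first by exists w.+1.
apply: IH; first by exists n.
move=> m Pm; have := H m Pm; rewrite leq_eqVlt => /orP[/eqP E|//].
by rewrite E in Pm.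
Qed.

Lemma min_exists (P : nat -> Prop) : (exists n, P n) -> exists m, P m /\ forall n, P n -> m <= n.
Proof.
case=> n; elim: n {-2}n (leqnn n) => [|N IH] n nN Pn.
  by exists n; split => // m _; lia.
case: (classic (exists m, m < n /\ P m)) => [[m [mn Pm]]|H].
  by apply: (IH m) => //; lia.
exists n; split => // m Pm; rewrite leqNgt; apply/negP => mn; apply: H; by exists m.
Qed.

Lemma tv_exists (T : finType) i (Zs : 'I_i -> seq {set T}) w :
  (forall j, 0 < size (Zs j)) ->
  (forall u : 'I_i -> nat, (forall j, u j < size (Zs j)) -> #|bag_inter Zs u| <= w) ->
  exists w', w' <= w /\ tuple_value Zs w'.
Proof.
move=> pos B.
pose P n := exists u : 'I_i -> nat, (forall j, u j < size (Zs j)) /\ #|bag_inter Zs u| = n.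
have P1 : exists n, P n by exists #|bag_inter Zs (fun _ => 0)|, (fun _ => 0).
have P2 : forall n, P n -> n <= w by move=> n [u [ul <-]]; apply: B.
have [m [[u [ul um]] Hm]] := max_exists P1 P2.
exists m; split; first by rewrite -um; apply: B.
split; first by exists u.
by move=> u' ul'; apply: Hm; exists u'.
Qed.

Lemma separation (M : finType) (eM : rel M) k (phi : M -> 'I_k -> nat)
  (Hd : forall a b, gdist eM a b = \sum_j absdiff (phi a j) (phi b j)) (med : med_prop eM)
  (A : {set M}) (cA : gconvex eM A) a b (Ha : a \in A)
  (Hmin : forall a', a' \in A -> gdist eM a b <= gdist eM a' b) a' (Ha' : a' \in A) j :
  ~ (phi a j < phi a' j /\ phi a j < phi b j) /\ ~ (phi a' j < phi a j /\ phi b j < phi a j).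
Proof.
have [m [m1 m2 m3]] := median_ex med a a' b.
have mA : m \in A := subsetP (cA a a' Ha Ha') m m1.
have hm := Hmin m mA.
have btw : forall x y z, z \in interval eM x y -> forall j,
    absdiff (phi x j) (phi z j) + absdiff (phi z j) (phi y j) = absdiff (phi x j) (phi y j).
  move=> x y z; rewrite /interval in_set !Hd => /eqP; exact: (@sum_between k (phi x) (phi y) (phi z)).
have gsym : forall x y, gdist eM x y = gdist eM y x.
  by move=> x y; rewrite !Hd; apply: eq_bigr => i _; rewrite absdiffC.
have g0 : gdist eM m a = 0.
  move: m3; rewrite /interval in_set => /eqP; rewrite (gsym b m) (gsym b a) => E.
  lia.
have e0 : absdiff (phi m j) (phi a j) = 0.
  have := leq_term (fun j => absdiff (phi m j) (phi a j)) j; rewrite -Hd g0; lia.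
have b1 := btw _ _ _ m1 j; have b2 := btw _ _ _ m2 j.
move: e0 b1 b2; rewrite /absdiff; lia.
Qed.


Lemma dir2 (T : finType) (e : rel T) i w : lattice_dec_width e i w ->
  exists w', w' <= w /\ path_tuple_width e i w'.
Proof.
case=> M [eM [X [[SG [[[[a0 _] _] med] [EC OC]]] [[k ki [n [phi [Hlt Hd]]]] Hw]]]].
pose psi (a : M) (j : nat) := oapp (phi a) 0 (insub j : option 'I_k).
have psiE : forall a (j : 'I_k), psi a j = phi a j by move=> a j; rewrite /psi valK.
pose L (j : nat) := (\max_(a : M) psi a j).+1.
pose bag (j : nat) (t : nat) := [set v | [exists a, exists b,
   [&& v \in X a, v \in X b, psi a j <= t & t <= psi b j]]].
pose Zs (j : 'I_i) := mkseq (bag j) (L j).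
have szZ : forall j, size (Zs j) = L j by move=> j; rewrite size_mkseq.
have nthZ : forall (j : 'I_i) t, t < L j -> nth set0 (Zs j) t = bag j t by move=> j t tl; rewrite nth_mkseq.
have psiL : forall a j, psi a j < L j.
  by move=> a j; rewrite ltnS; exact: (@leq_bigmax _ (fun a => psi a j) a).
have inbag : forall v j t, reflect (exists a b, [/\ v \in X a, v \in X b, psi a j <= t & t <= psi b j])
    (v \in bag j t).
  move=> v j t; rewrite inE; apply: (iffP existsP) => [[a /existsP [b /and4P [h1 h2 h3 h4]]]|[a [b [h1 h2 h3 h4]]]].
    by exists a, b.
  by exists a; apply/existsP; exists b; rewrite h1 h2 h3 h4.
have PD : forall j, path_decomposition e (Zs j).
  move=> j; split; first by rewrite szZ.
  split.
    move=> u v uv; have [a /andP [ua va]] := EC u v uv.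
    exists (psi a j); first by rewrite szZ.
    by rewrite nthZ //; apply/andP; split; apply/inbag; exists a, a.
  move=> v; split.
    have [[a va] _] := OC v; exists (psi a j); first by rewrite szZ.
    by rewrite nthZ //; apply/inbag; exists a, a.
  move=> x y z xy yz; rewrite szZ => zl.
  have xl : x < L j by apply: leq_ltn_trans (leq_trans xy yz) zl.
  have yl : y < L j by apply: leq_ltn_trans yz zl.
  rewrite !nthZ // => /inbag [a1 [b1 [h1 h2 h3 h4]]] /inbag [a2 [b2 [g1 g2 g3 g4]]].
  apply/inbag; exists a1, b2; split => //; lia.
have gsym : forall x y, gdist eM x y = gdist eM y x.
  by move=> x y; rewrite !Hd; apply: eq_bigr => j _; rewrite absdiffC.
have bound : forall t : 'I_i -> nat, (forall j, t j < size (Zs j)) -> #|bag_inter Zs t| <= w.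
  move=> t tl.
  set I := bag_inter Zs t.
  have inI : forall v, v \in I -> forall j : 'I_i,
      exists a b, [/\ v \in X a, v \in X b, psi a j <= t j & t j <= psi b j].
    move=> v /bigcapP H j; have := H j isT; rewrite nthZ; last by rewrite -szZ.
    by move/inbag.
  pose S v := [set a | v \in X a].
  have Sne : forall v, exists a, a \in S v.
    by move=> v; have [[a va] _] := OC v; exists a; rewrite inE.
  have Scv : forall v, gconvex eM (S v) by move=> v; have [_ c] := OC v.
  have pair : forall v u, v \in I -> u \in I -> exists x, x \in S v /\ x \in S u.
    move=> v u vI uI.
    have [a1 a1S] := Sne v; have [b1 b1S] := Sne u.
    case: (@arg_minnP _ (a1, b1) (fun p : M * M => (p.1 \in S v) && (p.2 \in S u))
       (fun p => gdist eM p.1 p.2)); first by rewrite /= a1S b1S.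
    case=> a b /= /andP[aS bS] Hmin.
    case: (boolP [exists j, phi a j != phi b j]) => [/existsP [j hj]|/existsPn hn]; last first.
      exists a; split => //; suff -> : a = b by [].
      apply: (gdist_eq0 (eM:=eM)); rewrite Hd; apply: big1 => j _.
      by move: (hn j); rewrite negbK => /eqP ->; rewrite /absdiff subnn.
    exfalso.
    pose jj := widen_ord ki j.
    have pe : forall a, psi a jj = phi a j := fun a => psiE a j.
    have [a2 [b2 [va2 vb2 la2 lb2]]] := inI v vI jj.
    have [a3 [b3 [ua3 ub3 la3 lb3]]] := inI u uI jj.
    rewrite !pe in la2 lb2 la3 lb3.
    have HminA : forall a', a' \in S v -> gdist eM a b <= gdist eM a' b.
      by move=> a' h; apply: (Hmin (a', b)); rewrite /= h bS.
    have HminB : forall b', b' \in S u -> gdist eM b a <= gdist eM b' a.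
      by move=> b' h; rewrite gsym (gsym b'); apply: (Hmin (a, b')); rewrite /= h aS.
    have a2S : a2 \in S v by rewrite inE.
    have b2S : b2 \in S v by rewrite inE.
    have a3S : a3 \in S u by rewrite inE.
    have b3S : b3 \in S u by rewrite inE.
    have s1 := separation Hd med (Scv v) aS HminA (a' := a2) (a2S : a2 \in S v) j.
    have s2 := separation Hd med (Scv v) aS HminA (a' := b2) (b2S : b2 \in S v) j.
    have s3 := separation Hd med (Scv u) bS HminB (a' := a3) (a3S : a3 \in S u) j.
    have s4 := separation Hd med (Scv u) bS HminB (a' := b3) (b3S : b3 \in S u) j.
    case: (ltngtP (phi a j) (phi b j)) => c; last by rewrite c eqxx in hj.
      have h1 : phi b2 j <= phi a j.
        by rewrite leqNgt; apply/negP => h; case: s2 => H _; apply: H.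
      have h2 : phi b j <= phi a3 j.
        by rewrite leqNgt; apply/negP => h; case: s3 => _ H; apply: H.
      move: h1 h2 c la3 lb2; clear; lia.
    have h1 : phi a j <= phi a2 j.
      by rewrite leqNgt; apply/negP => h; case: s1 => _ H; apply: H.
    have h2 : phi b3 j <= phi b j.
      by rewrite leqNgt; apply/negP => h; case: s4 => H _; apply: H.
    move: h1 h2 c la2 lb3; clear; lia.
  have conv : forall A, A \in [seq S v | v <- enum I] -> gconvex eM A.
    by move=> A /mapP [v _ ->]; apply: Scv.
  have pw : forall A B, A \in [seq S v | v <- enum I] -> B \in [seq S v | v <- enum I] ->
      exists x, x \in A /\ x \in B.
    move=> A B /mapP [v vI ->] /mapP [u uI ->]; apply: pair; by rewrite -mem_enum.
  have [x Hx] := @helly M eM a0 med _ [seq S v | v <- enum I] erefl conv pw.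
  have sub : I \subset X x.
    apply/subsetP => v vI; have vE : v \in enum I by rewrite mem_enum.
    by have := Hx (S v) (map_f _ vE); rewrite inE.
  rewrite -Hw; apply: leq_trans (subset_leq_card sub) _.
  exact: (@leq_bigmax _ (fun a => #|X a|) x).
have [w' [w'w TV]] := @tv_exists T i Zs w (fun j => ltn0Sn _ : 0 < size (Zs j)) bound.
by exists w'; split => //; exists Zs; split.
Qed.

Unset Implicit Arguments.

Theorem mainTheorem4 (T : finType) (e : rel T) (i : nat) :
  simple_graph e -> 1 <= i ->
  exists w, latticewidth_is e i w /\ is_min (path_tuple_width e i) w.
Proof.
move=> _ _.
pose Zs (j : 'I_i) := [:: [set: T]].
have PD : forall j, path_decomposition e (Zs j).
  move=> j; split => //; split.
    by move=> u v _; exists 0 => //; rewrite /= !inE.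
  move=> v; split; first by exists 0 => //; rewrite /= inE.
  by move=> a b c ab bc; rewrite /= ltnS leqn0 => /eqP c0; have -> : b = 0 by lia.
have [w0 [_ TV]] := @tv_exists T i Zs #|T| (fun j => isT) (fun u _ => max_card _).
have [m [Pm Hm]] := @min_exists (path_tuple_width e i) (ex_intro _ w0 (ex_intro _ Zs (conj PD TV))).
exists m; split; last by split.
split; first exact: dir1.
move=> w' /dir2 [w'' [le Pw]]; exact: leq_trans (Hm _ Pw) le.
Qed.
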